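(* If $\mathrm{char}(\Bbbk)=0$ or $\mathrm{char}(\Bbbk)\ge5$, then $F=\{f_1,f_2,f_3,f_4\}$, where $f_1=3y^3-4xyz+x^4-3y^3z^5-2xy^6z^2-x^2y^4z^3$, $f_2=2y^2z-3xz^2+x^3y-2y^7z^2-xy^5z^3$, $f_3=yz^2-3x^2y^2+2x^3z-y^6z^3-2xy^4z^4$, $f_4=z^3-2xy^3+x^2yz-y^5z^4$, is a standard basis of $P$ with respect to the negative degree reverse lexicographic order $>_{\rm ds}$.
   Context: $\Bbbk$ is a field, $\rho:\Bbbk[[x,y,z]]\to\Bbbk[[t]]$ is the $\Bbbk$-algebra morphism with $\rho(x)=t^6+t^{31}$, $\rho(y)=t^8$, $\rho(z)=t^{10}$, and $P=\ker\rho$. The order $>_{\rm ds}$ on monomials $x^\alpha=x^{\alpha_1}y^{\alpha_2}z^{\alpha_3}$: $x^\alpha>_{\rm ds}x^\beta$ iff $|\alpha|<|\beta|$, or $|\alpha|=|\beta|$ and there is $i\in\{1,2\}$ with $\alpha_3=\beta_3,\ldots,\alpha_{i+1}=\beta_{i+1}$ and $\alpha_i<\beta_i$ (so $1>x>y>z>x^2>xy>y^2>xz>yz>z^2>\cdots$). For $0\ne f\in\Bbbk[[x,y,z]]$, the leading monomial $\mathrm{LM}(f)$ is the $>_{\rm ds}$-largest monomial in the support of $f$. A finite set $G\subseteq I$ is a standard basis of an ideal $I\subseteq\Bbbk[[x,y,z]]$ if the ideal generated by $\{\mathrm{LM}(g):g\in G,g\neq0\}$ equals the ideal generated by $\{\mathrm{LM}(f):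 f\in I, f\ne0\}$. *)

(* Defs.v *)
From mathcomp Require Import all_boot all_algebra.
From Stdlib Require List.
Set Implicit Arguments. Unset Strict Implicit. Unset Printing Implicit Defensive.
Import GRing.Theory.
Local Open Scope ring_scope.

(* Exponent vectors (a1,a2,a3) of monomials x^a1 y^a2 z^a3. *)
Definition mon := (nat * nat * nat)%type.
Definition mdeg (a : mon) : nat := (a.1.1 + a.1.2 + a.2)%N.

Definition ds_gt (a b : mon) : Prop :=
  (mdeg a < mdeg b)%N \/
  (mdeg a = mdeg b /\
    ( (a.2 < b.2)%N
    \/ (a.2 = b.2 /\ (a.1.2 < b.1.2)%N)
    \/ (a.2 = b.2 /\ a.1.2 = b.1.2 /\ (a.1.1 < b.1.1)%N))).

Section PowerSeries.
Variable K : fieldType.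

(* Formal power series in K[[x,y,z]], given by their coefficient function. *)
Definition ps := mon -> K.

Definition psmul (f g : ps) : ps := fun a =>
  \sum_(i < a.1.1.+1) \sum_(j < a.1.2.+1) \sum_(k < a.2.+1)
     f (nat_of_ord i, nat_of_ord j, nat_of_ord k) *
     g ((a.1.1 - i)%N, (a.1.2 - j)%N, (a.2 - k)%N).

Definition monomial (a : mon) : ps := fun b => (b == a)%:R.

Definition ideal_gen (S : ps -> Prop) (f : ps) : Prop :=
  exists s : seq (ps * ps),
    (forall p, List.In p s -> S p.1) /\
    forall a, f a = \sum_(p <- s) psmul p.1 p.2 a.

Definition is_LM (f : ps) (a : mon) : Prop :=
  f a != 0 /\ forall b, f b != 0 -> b <> a -> ds_gt a b.

Definition LMset (S : ps -> Prop) (m : ps) : Prop :=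
  exists f a, S f /\ (exists b, f b != 0) /\ is_LM f a /\ m = monomial a.

Definition standard_basis (G I : ps -> Prop) : Prop :=
  (forall g, G g -> I g) /\
  (forall h, ideal_gen (LMset G) h <-> ideal_gen (LMset I) h).

Definition ser := nat -> K.
Definition smul (s u : ser) : ser := fun n => \sum_(i < n.+1) s i * u (n - i)%N.
Definition sone : ser := fun n => (n == 0%N)%:R.
Definition spow (s : ser) (m : nat) : ser := iter m (smul s) sone.

Definition tX : ser := fun n => (n == 6%N)%:R + (n == 31%N)%:R.
Definition tY : ser := fun n => (n == 8%N)%:R.
Definition tZ : ser := fun n => (n == 10%N)%:R.

(* rho(f) = f(t^6+t^31, t^8, t^10); since tX, tY, tZ have order >= 1,
   only monomials with all exponents <= n contribute to the coefficient of t^n. *)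
Definition rho (f : ps) : ser := fun n =>
  \sum_(i < n.+1) \sum_(j < n.+1) \sum_(k < n.+1)
    f (nat_of_ord i, nat_of_ord j, nat_of_ord k) *
    smul (spow tX i) (smul (spow tY j) (spow tZ k)) n.

Definition kerP (f : ps) : Prop := forall n, rho f n = 0.

Definition poly_of (s : seq (mon * int)) : ps := fun a =>
  \sum_(p <- s | p.1 == a) (p.2)%:~R.

Definition f1 : ps := poly_of
  [:: ((0,3,0)%N, 3%:Z); ((1,1,1)%N, - 4%:Z); ((4,0,0)%N, 1%:Z);
      ((0,3,5)%N, - 3%:Z); ((1,6,2)%N, - 2%:Z); ((2,4,3)%N, - 1%:Z)].
Definition f2 : ps := poly_of
  [:: ((0,2,1)%N, 2%:Z); ((1,0,2)%N, - 3%:Z); ((3,1,0)%N, 1%:Z);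
      ((0,7,2)%N, - 2%:Z); ((1,5,3)%N, - 1%:Z)].
Definition f3 : ps := poly_of
  [:: ((0,1,2)%N, 1%:Z); ((2,2,0)%N, - 3%:Z); ((3,0,1)%N, 2%:Z);
      ((0,6,3)%N, - 1%:Z); ((1,4,4)%N, - 2%:Z)].
Definition f4 : ps := poly_of
  [:: ((0,0,3)%N, 1%:Z); ((1,3,0)%N, - 2%:Z); ((2,1,1)%N, 1%:Z);
      ((0,5,4)%N, - 1%:Z)].

End PowerSeries.

(* Main.v *)
Require Import Defs.
From mathcomp Require Import all_boot all_algebra.
From Stdlib Require List.
From mathcomp Require Import zify ring.
Set Implicit Arguments. Unset Strict Implicit. Unset Printing Implicit Defensive.
Import GRing.Theory.
Local Open Scope ring_scope.

Lemma sum_pick1 (K : fieldType) N a (g : nat -> K) : (a < N)%N ->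
  \sum_(i < N) ((i : nat) == a)%:R * g i = g a.
Proof.
move=> Ha; rewrite (bigD1 (Ordinal Ha)) //= eqxx mul1r big1 ?addr0 //.
move=> i Hi; suff -> : ((i : nat) == a) = false by rewrite mul0r.
by apply/negbTE; apply: contra Hi => /eqP Hia; apply/eqP/val_inj.
Qed.

Lemma eq_smul (K : fieldType) (s s' u u' : ser K) n :
  (forall m, s m = s' m) -> (forall m, u m = u' m) -> smul s u n = smul s' u' n.
Proof. by move=> Hs Hu; apply: eq_bigr => i _; rewrite Hs Hu. Qed.

Lemma ind_shift (K : fieldType) a b n :
  ((a <= n)%N%:R * ((n - a)%N == b)%:R : K) = (n == a + b)%N%:R.
Proof.
rewrite -natrM mulnb; congr (nat_of_bool _)%:R.
by apply/andP/eqP => [[/leP H1 /eqP H2]|H]; [lia | split; [apply/leP|apply/eqP]; lia].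
Qed.

Lemma smul_deltal (K : fieldType) (u : ser K) a n :
  smul (fun m => (m == a)%:R) u n = (a <= n)%N%:R * u (n - a)%N.
Proof.
rewrite /smul; case: (leqP a n) => h.
  by rewrite (sum_pick1 (fun i => u (n - i)%N)) ?mul1r // ltnS.
rewrite mul0r big1 // => i _.
suff -> : ((i : nat) == a) = false by rewrite mul0r.
apply/negbTE/eqP => E; have := ltn_ord i; lia.
Qed.

Lemma smul_deltar (K : fieldType) (s : ser K) N n :
  smul s (fun m => (m == N)%:R) n = (N <= n)%N%:R * s (n - N)%N.
Proof.
rewrite /smul; case: (leqP N n) => h.
  rewrite mul1r -(sum_pick1 s (N := n.+1)) ?ltnS ?leq_subr //.
  apply: eq_bigr => i _; rewrite mulrC.
  have := ltn_ord i; rewrite ltnS => Hi.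
  have -> : ((n - i)%N == N) = ((i : nat) == (n - N)%N) by apply/eqP/eqP => E; lia.
  by [].
rewrite mul0r big1 // => i _.
suff -> : ((n - i)%N == N) = false by rewrite mulr0.
apply/negbTE/eqP => E; lia.
Qed.

Lemma spow_delta (K : fieldType) a j n :
  spow (fun m => (m == a)%:R : K) j n = (n == a * j)%N%:R.
Proof.
elim: j n => [|j IH] n; first by rewrite /spow /= muln0.
rewrite /spow iterS -/(spow _ j) smul_deltal IH ind_shift.
by rewrite mulnS.
Qed.

Lemma smul_tX (K : fieldType) (u : ser K) n :
  smul (tX K) u n = (6 <= n)%N%:R * u (n - 6)%N + (31 <= n)%N%:R * u (n - 31)%N.
Proof.
rewrite -smul_deltal -smul_deltal /smul -big_split /=.
by apply: eq_bigr => i _; rewrite /tX mulrDl.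
Qed.

Lemma spow_tX (K : fieldType) i n :
  spow (tX K) i n = \sum_(l < i.+1) 'C(i,l)%:R * (n == 6*i + 25*l)%N%:R.
Proof.
elim: i n => [|i IH] n.
  by rewrite /spow /= big_ord1 bin0 mul1r muln0 addn0.
rewrite /spow iterS -/(spow _ i) smul_tX !IH !mulr_sumr.
have E1 : forall l : 'I_i.+1, (6 <= n)%N%:R * ('C(i, l)%:R * (n - 6 == 6 * i + 25 * l)%N%:R)
   = 'C(i,l)%:R * (n == 6 * i.+1 + 25 * l)%N%:R :> K.
  move=> l; rewrite mulrCA ind_shift; congr (_ * (_ == _)%N%:R); lia.
have E2 : forall l : 'I_i.+1, (31 <= n)%N%:R * ('C(i, l)%:R * (n - 31 == 6 * i + 25 * l)%N%:R)
   = 'C(i,l)%:R * (n == 6 * i.+1 + 25 * l.+1)%N%:R :> K.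
  move=> l; rewrite mulrCA ind_shift; congr (_ * (_ == _)%N%:R); lia.
rewrite (eq_bigr _ (fun l _ => E1 l)) (eq_bigr _ (fun l _ => E2 l)).
rewrite [RHS]big_ord_recl bin0 /=.
under [in RHS]eq_bigr => l _ do rewrite binS natrD mulrDl.
rewrite big_split /= addrA; congr (_ + _).
rewrite [in RHS](big_ord_recr i) /= bin_small // mul0r addr0.
rewrite big_ord_recl bin0 /= muln0 addn0 mul1r; congr (_ + _).
Qed.

Lemma mono_coef (K : fieldType) i j k n : (i < n.+1)%N ->
  smul (spow (tX K) i) (smul (spow (tY K) j) (spow (tZ K) k)) n =
  \sum_(l < n.+1) 'C(i,l)%:R * (n == 6*i+8*j+10*k+25*l)%N%:R.
Proof.
move=> Hi.
have HYZ : forall m, smul (spow (tY K) j) (spow (tZ K) k) m = (m == 8*j + 10*k)%N%:R.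
  move=> m; rewrite (@eq_smul _ _ (fun m => (m == 8*j)%N%:R) _ (fun m => (m == 10*k)%N%:R)).
  - by rewrite smul_deltal ind_shift.
  - by move=> m'; rewrite /tY spow_delta mulnC.
  - by move=> m'; rewrite /tZ spow_delta mulnC.
rewrite (@eq_smul _ _ (spow (tX K) i) _ (fun m => (m == 8*j + 10*k)%N%:R)) //.
rewrite smul_deltar spow_tX mulr_sumr.
rewrite (big_ord_widen n.+1 (fun l => (8 * j + 10 * k <= n)%N%:R *
     ('C(i, l)%:R * (n - (8 * j + 10 * k) == 6 * i + 25 * l)%N%:R))) //.
rewrite big_mkcond /=; apply: eq_bigr => l _.
case: ifP => Hl.
  rewrite mulrCA ind_shift; congr (_ * (_ == _)%N%:R); lia.
by rewrite bin_small ?mul0r // ltnNge -ltnS Hl.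
Qed.

Lemma rho_coef (K : fieldType) (f : ps K) n : rho f n =
  \sum_(i<n.+1)\sum_(j<n.+1)\sum_(k<n.+1)\sum_(l<n.+1)
     f (i : nat, j : nat, k : nat) * 'C(i,l)%:R * (n == 6*i+8*j+10*k+25*l)%N%:R.
Proof.
rewrite /rho; apply: eq_bigr => i _; apply: eq_bigr => j _; apply: eq_bigr => k _.
rewrite mono_coef // mulr_sumr; apply: eq_bigr => l _; by rewrite mulrA.
Qed.

Definition dl (K : fieldType) (a b : nat) : K := (a == b)%:R.

Lemma pick4 (K : fieldType) (f : ps K) n (L : seq (nat*nat*nat*nat)) :
  uniq L ->
  (forall q, q \in L -> n = 6*q.1.1.1 + 8*q.1.1.2 + 10*q.1.2 + 25*q.2)%N ->
  (forall i j k l, f (i,j,k) != 0 -> (l <= i)%N ->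
      n = (6*i+8*j+10*k+25*l)%N -> (i,j,k,l) \in L) ->
  rho f n = \sum_(q <- L) f (q.1.1.1, q.1.1.2, q.1.2) * 'C(q.1.1.1, q.2)%:R.
Proof.
move=> uL HL Hf.
set g := fun q : nat*nat*nat*nat => f (q.1.1.1, q.1.1.2, q.1.2) * 'C(q.1.1.1, q.2)%:R.
have claim : forall i j k l : nat,
   f (i, j, k) * 'C(i,l)%:R * (n == 6*i+8*j+10*k+25*l)%N%:R =
   \sum_(q <- L) dl K i q.1.1.1 * (dl K j q.1.1.2 * (dl K k q.1.2 * (dl K l q.2 * g q))).
  move=> i j k l.
  have Hd : forall q, dl K i q.1.1.1 * (dl K j q.1.1.2 * (dl K k q.1.2 * (dl K l q.2 * g q)))
      = ((i,j,k,l) == q)%:R * g q.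
    move=> [[[a b] c] e] /=; rewrite /dl !mulrA -!natrM !mulnb.
    by rewrite -!xpair_eqE.
  under eq_bigr => q _ do rewrite Hd.
  case: (boolP ((i,j,k,l) \in L)) => Hin.
    rewrite (big_rem _ Hin) /= eqxx mul1r big1_seq ?addr0.
      by rewrite /g /= (HL _ Hin) /= eqxx mulr1.
    move=> q /andP [_ Hq]; rewrite (mem_rem_uniq _ uL) in Hq.
    case/andP: Hq => Hq _; rewrite eq_sym (negbTE Hq) mul0r //.
  rewrite big1_seq; last first.
    move=> q /andP [_ Hq]; suff -> : ((i,j,k,l) == q) = false by rewrite mul0r.
    by apply/negbTE; apply: contra Hin => /eqP ->.
  case: (eqVneq (f (i,j,k)) 0) => [->|Hf0]; first by rewrite !mul0r.
  case: (leqP l i) => Hli; last by rewrite bin_small // mulr0 mul0r.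
  case: eqP => Hn; last by rewrite mulr0.
  by move: Hin; rewrite (Hf _ _ _ _ Hf0 Hli Hn).
rewrite rho_coef.
under eq_bigr => i _ do under eq_bigr => j _ do under eq_bigr => k _ do
   under eq_bigr => l _ do rewrite claim.
have Hq : forall q, q \in L -> g q = \sum_(i<n.+1) dl K i q.1.1.1 * \sum_(j<n.+1) dl K j q.1.1.2 *
   \sum_(k<n.+1) dl K k q.1.2 * \sum_(l<n.+1) dl K l q.2 * g q.
  move=> q Hin; have := HL _ Hin => Hn.
  rewrite /dl (sum_pick1 (fun _ => _)); last by lia.
  rewrite (sum_pick1 (fun _ => _)); last by lia.
  rewrite (sum_pick1 (fun _ => _)); last by lia.
  rewrite (sum_pick1 (fun _ => _)); last by lia.
  by [].
rewrite [RHS](eq_big_seq _ Hq).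
under eq_bigr => i _ do under eq_bigr => j _ do under eq_bigr => k _ do rewrite exchange_big.
under eq_bigr => i _ do under eq_bigr => j _ do rewrite exchange_big.
under eq_bigr => i _ do rewrite exchange_big.
rewrite exchange_big; apply: eq_bigr => q _.
apply: eq_bigr => i _; rewrite mulr_sumr; apply: eq_bigr => j _.
rewrite !mulr_sumr; apply: eq_bigr => k _.
rewrite !mulr_sumr; apply: eq_bigr => l _.
by [].
Qed.

Lemma mem1 (a b c d a1 b1 c1 d1 : nat) :
  (a = a1 /\ b = b1 /\ c = c1 /\ d = d1) -> (a,b,c,d) \in [:: (a1,b1,c1,d1)].
Proof. by case=> [-> [-> [-> ->]]]; rewrite inE. Qed.

Lemma mem2 (a b c d a1 b1 c1 d1 a2 b2 c2 d2 : nat) :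
  (a = a1 /\ b = b1 /\ c = c1 /\ d = d1) \/ (a = a2 /\ b = b2 /\ c = c2 /\ d = d2) ->
  (a,b,c,d) \in [:: (a1,b1,c1,d1); (a2,b2,c2,d2)].
Proof. by case=> [[-> [-> [-> ->]]]|[-> [-> [-> ->]]]]; rewrite !inE eqxx ?orbT. Qed.

Lemma uniq2 (a1 b1 c1 d1 a2 b2 c2 d2 : nat) : (a1 <> a2)%N ->
  uniq [:: (a1,b1,c1,d1); (a2,b2,c2,d2)].
Proof.
move=> H; rewrite /= inE andbT; apply/negP => /eqP [E]; lia.
Qed.

Lemma LMD (K : fieldType) (f : ps K) a b : is_LM f a -> f b != 0 -> b = a \/ ds_gt a b.
Proof.
case=> _ H Hb; case: (eqVneq b a) => [->|Hne]; first by left.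
by right; apply: H => // E; rewrite E eqxx in Hne.
Qed.

Ltac solveHfg MEM f a HLM :=
  let i := fresh "i" in let j := fresh "j" in let k := fresh "k" in let l := fresh "l" in
  let Hf0 := fresh in let Hli := fresh in let Hn := fresh in
  move=> i j k l Hf0 Hli Hn;
  MEM;
  case: (LMD (b := (i,j,k)) HLM Hf0) => [[? ? ?]|]; rewrite /ds_gt /mdeg /=; lia.

Ltac solveHf1 f a HLM := solveHfg ltac:(apply mem1) f a HLM.
Ltac solveHf2 f a HLM := solveHfg ltac:(apply mem2) f a HLM.

Ltac solveHL := let q := fresh "q" in move=> q; rewrite !inE;
  first [ move=> /eqP -> /= | case/orP => /eqP -> /= ]; lia.

Lemma LM_in_J (K : fieldType) (h2 : (2%:R : K) != 0) (h3 : (3%:R : K) != 0)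
   (f : ps K) a : kerP f -> is_LM f a -> (3 <= a.1.2 + a.2)%N.
Proof.
move=> Hker HLM; have Hfa := HLM.1.
case: a HLM Hfa => [[al be] ga] HLM Hfa /=.
rewrite leqNgt; apply/negP => Hlt.
have rho0 : forall n L, uniq L ->
  (forall q, q \in L -> n = 6*q.1.1.1 + 8*q.1.1.2 + 10*q.1.2 + 25*q.2)%N ->
  (forall i j k l, f (i,j,k) != 0 -> (l <= i)%N ->
      n = (6*i+8*j+10*k+25*l)%N -> (i,j,k,l) \in L) ->
  \sum_(q <- L) f (q.1.1.1, q.1.1.2, q.1.2) * 'C(q.1.1.1, q.2)%:R = 0.
  by move=> n L uL HL Hf; rewrite -(pick4 uL HL Hf); apply: Hker.
move: HLM Hfa Hlt; case: be => [|[|[|be]]]; case: ga => [|[|[|ga]]] => HLM Hfa Hlt //.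
all: try by exfalso; move: Hlt; lia.
-
  have E : \sum_(q <- [:: (al,0,0,0)]%N) f (q.1.1.1, q.1.1.2, q.1.2) * 'C(q.1.1.1, q.2)%:R = 0.
    by apply: (rho0 (6*al)%N); [done | solveHL | solveHf1 f (al,0,0)%N HLM].
  by move: E; rewrite big_cons big_nil /= bin0 mulr1 addr0 => E; rewrite E eqxx in Hfa.
-
  have E : \sum_(q <- [:: (al,0,1,0)]%N) f (q.1.1.1, q.1.1.2, q.1.2) * 'C(q.1.1.1, q.2)%:R = 0.
    by apply: (rho0 (6*al+10)%N); [done | solveHL | solveHf1 f (al,0,1)%N HLM].
  by move: E; rewrite big_cons big_nil /= bin0 mulr1 addr0 => E; rewrite E eqxx in Hfa.
-
  have E1 : \sum_(q <- [:: (al,0,2,0); (al+2,1,0,0)]%N) f (q.1.1.1, q.1.1.2, q.1.2) * 'C(q.1.1.1, q.2)%:R = 0.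
    by apply: (rho0 (6*al+20)%N); [apply: uniq2; lia | solveHL | solveHf2 f (al,0,2)%N HLM].
  have E2 : \sum_(q <- [:: (al,0,2,1); (al+2,1,0,1)]%N) f (q.1.1.1, q.1.1.2, q.1.2) * 'C(q.1.1.1, q.2)%:R = 0.
    by apply: (rho0 (6*al+45)%N); [apply: uniq2; lia | solveHL | solveHf2 f (al,0,2)%N HLM].
  move: E1 E2; rewrite !big_cons !big_nil /= !bin0 !bin1 !mulr1 !addr0.
  set x := f _; set y := f _ => E1 E2.
  have Ey : y = - x by apply/eqP; rewrite -addr_eq0 addrC E1.
  have : x * 2%:R = 0 by rewrite -oppr0 -E2 Ey natrD; ring.
  move/eqP; rewrite mulf_eq0 (negbTE Hfa) /=.
  by rewrite (negbTE h2).
-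
  have E : \sum_(q <- [:: (al,1,0,0)]%N) f (q.1.1.1, q.1.1.2, q.1.2) * 'C(q.1.1.1, q.2)%:R = 0.
    by apply: (rho0 (6*al+8)%N); [done | solveHL | solveHf1 f (al,1,0)%N HLM].
  by move: E; rewrite big_cons big_nil /= bin0 mulr1 addr0 => E; rewrite E eqxx in Hfa.
-
  have E1 : \sum_(q <- [:: (al,1,1,0); (al+3,0,0,0)]%N) f (q.1.1.1, q.1.1.2, q.1.2) * 'C(q.1.1.1, q.2)%:R = 0.
    by apply: (rho0 (6*al+18)%N); [apply: uniq2; lia | solveHL | solveHf2 f (al,1,1)%N HLM].
  have E2 : \sum_(q <- [:: (al,1,1,1); (al+3,0,0,1)]%N) f (q.1.1.1, q.1.1.2, q.1.2) * 'C(q.1.1.1, q.2)%:R = 0.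
    by apply: (rho0 (6*al+43)%N); [apply: uniq2; lia | solveHL | solveHf2 f (al,1,1)%N HLM].
  move: E1 E2; rewrite !big_cons !big_nil /= !bin0 !bin1 !mulr1 !addr0.
  set x := f _; set y := f _ => E1 E2.
  have Ey : y = - x by apply/eqP; rewrite -addr_eq0 addrC E1.
  have : x * 3%:R = 0 by rewrite -oppr0 -E2 Ey natrD; ring.
  move/eqP; rewrite mulf_eq0 (negbTE Hfa) /=.
  by rewrite (negbTE h3).
-
  have E1 : \sum_(q <- [:: (al,2,0,0); (al+1,0,1,0)]%N) f (q.1.1.1, q.1.1.2, q.1.2) * 'C(q.1.1.1, q.2)%:R = 0.
    by apply: (rho0 (6*al+16)%N); [apply: uniq2; lia | solveHL | solveHf2 f (al,2,0)%N HLM].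
  have E2 : \sum_(q <- [:: (al,2,0,1); (al+1,0,1,1)]%N) f (q.1.1.1, q.1.1.2, q.1.2) * 'C(q.1.1.1, q.2)%:R = 0.
    by apply: (rho0 (6*al+41)%N); [apply: uniq2; lia | solveHL | solveHf2 f (al,2,0)%N HLM].
  move: E1 E2; rewrite !big_cons !big_nil /= !bin0 !bin1 !mulr1 !addr0.
  set x := f _; set y := f _ => E1 E2.
  have Ey : y = - x by apply/eqP; rewrite -addr_eq0 addrC E1.
  have : x * 1%:R = 0 by rewrite -oppr0 -E2 Ey natrD; ring.
  move/eqP; rewrite mulf_eq0 (negbTE Hfa) /=.
  by rewrite oner_eq0.
Qed.

Lemma sum_only (K : fieldType) N a (Ha : (a < N)%N) (F : 'I_N -> K) :
  (forall i : 'I_N, (i : nat) != a -> F i = 0) -> \sum_(i < N) F i = F (Ordinal Ha).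
Proof.
move=> H; rewrite (bigD1 (Ordinal Ha)) //= big1 ?addr0 // => i Hi; apply: H.
Qed.

Lemma rho_monomial (K : fieldType) (e : mon) n :
  rho (monomial K e) n = \sum_(l < n.+1) 'C(e.1.1, l)%:R *
        (n == 6*e.1.1 + 8*e.1.2 + 10*e.2 + 25*l)%N%:R.
Proof.
case: e => [[a b] c] /=; rewrite rho_coef.
have Hm : forall i j k : nat, monomial K (a,b,c) (i,j,k) =
    (i == a)%:R * ((j == b)%:R * (k == c)%:R).
  by move=> i j k; rewrite /monomial -!natrM !mulnb xpair_eqE -andbA.
case: (leqP a n) => Ha; [case: (leqP b n) => Hb; [case: (leqP c n) => Hc|]|].
- rewrite [LHS](sum_only (Ha : (a < n.+1)%N)); last first.
    move=> i Hi; rewrite big1 // => j _; rewrite big1 // => k _; rewrite big1 // => l _.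
    by rewrite Hm (negbTE Hi) !(mul0r, mulr0).
  rewrite [LHS](sum_only (Hb : (b < n.+1)%N)); last first.
    move=> j Hj; rewrite big1 // => k _; rewrite big1 // => l _.
    by rewrite Hm (negbTE Hj) !(mul0r, mulr0).
  rewrite [LHS](sum_only (Hc : (c < n.+1)%N)); last first.
    move=> k Hk; rewrite big1 // => l _.
    by rewrite Hm (negbTE Hk) !(mul0r, mulr0).
  by apply: eq_bigr => l _ /=; rewrite Hm !eqxx !mul1r.
- rewrite big1; last first.
    move=> i _; rewrite big1 // => j _; rewrite big1 // => k _; rewrite big1 // => l _.
    rewrite Hm; case: ((k : nat) =P c) => [Ek|]; last by rewrite !(mul0r, mulr0).
    have := ltn_ord k; lia.
  by rewrite big1 // => l _; case: eqP; [lia | rewrite mulr0].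
- rewrite big1; last first.
    move=> i _; rewrite big1 // => j _; rewrite big1 // => k _; rewrite big1 // => l _.
    rewrite Hm; case: ((j : nat) =P b) => [Ej|]; last by rewrite !(mul0r, mulr0).
    have := ltn_ord j; lia.
  by rewrite big1 // => l _; case: eqP; [lia | rewrite mulr0].
- rewrite big1; last first.
    move=> i _; rewrite big1 // => j _; rewrite big1 // => k _; rewrite big1 // => l _.
    rewrite Hm; case: ((i : nat) =P a) => [Ei|]; last by rewrite !(mul0r, mulr0).
    have := ltn_ord i; lia.
  by rewrite big1 // => l _; case: eqP; [lia | rewrite mulr0].
Qed.

Lemma rho_lin (K : fieldType) (I : Type) (s : seq I) (c : I -> K) (g : I -> ps K) n :
  rho (fun a => \sum_(p <- s) c p * g p a) n = \sum_(p <- s) c p * rho (g p) n.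
Proof.
match goal with |- _ = ?r => set R := r end.
rewrite /rho.
under eq_bigr => i _ do under eq_bigr => j _ do under eq_bigr => k _ do rewrite mulr_suml.
under eq_bigr => i _ do under eq_bigr => j _ do rewrite exchange_big.
under eq_bigr => i _ do rewrite exchange_big.
rewrite exchange_big /R; apply: eq_bigr => p _.
rewrite /rho mulr_sumr; apply: eq_bigr => i _; rewrite mulr_sumr; apply: eq_bigr => j _.
rewrite mulr_sumr; apply: eq_bigr => k _; by rewrite mulrA.
Qed.

Lemma poly_ofE (K : fieldType) (s : seq (mon * int)) a :
  poly_of K s a = \sum_(p <- s) (p.2)%:~R * monomial K p.1 a.
Proof.
rewrite /poly_of big_mkcond; apply: eq_bigr => p _.
by rewrite /monomial eq_sym; case: eqP => _; rewrite ?mulr1 ?mulr0.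
Qed.

Lemma sum_trunc (K : fieldType) m k (g : nat -> K) : (k <= m)%N ->
  (forall l, (k <= l)%N -> (l < m)%N -> g l = 0) ->
  \sum_(l < m) g l = \sum_(l < k) g l.
Proof.
move=> Hk H; rewrite (big_ord_widen m g Hk) [RHS]big_mkcond /=.
apply: eq_bigr => l _; case: ifP => // Hl.
by rewrite H // leqNgt Hl.
Qed.

Definition terms (s : seq (mon * int)) : seq (int * nat) :=
  [seq (p.2 * ('C(p.1.1.1, l))%:Z, (6*p.1.1.1 + 8*p.1.1.2 + 10*p.1.2 + 25*l)%N)
    | p <- s, l <- iota 0 5].

Lemma eq_rho (K : fieldType) (f g : ps K) n : (forall a, f a = g a) -> rho f n = rho g n.
Proof.
by move=> H; rewrite /rho; apply: eq_bigr => i _; apply: eq_bigr => j _; apply: eq_bigr => k _; rewrite H.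
Qed.

Lemma rho_poly (K : fieldType) (s : seq (mon * int)) n :
  all (fun p : mon * int => p.1.1.1 <= 4)%N s ->
  rho (poly_of K s) n = \sum_(q <- terms s) (q.1)%:~R * (n == q.2)%:R.
Proof.
move=> Hs.
rewrite (@eq_rho _ _ (fun a => \sum_(p <- s) (p.2)%:~R * monomial K p.1 a)); last exact: poly_ofE.
rewrite rho_lin /terms big_allpairs_dep /=.
rewrite big_seq [RHS]big_seq; apply: eq_bigr => p Hp.
have Hp4 : (p.1.1.1 <= 4)%N by move/allP: Hs => /(_ p Hp).
rewrite rho_monomial mulr_sumr.
set G := fun l : nat => p.2%:~R * ('C(p.1.1.1, l)%:R *
      (n == 6 * p.1.1.1 + 8 * p.1.1.2 + 10 * p.1.2 + 25 * l)%N%:R) : K.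
have HG : forall l, (minn 5 n.+1 <= l)%N -> G l = 0.
  move=> l Hl; rewrite /G; case: (leqP 5 l) => H5.
    by rewrite bin_small ?mul0r ?mulr0 //; lia.
  case: eqP => E; last by rewrite !mulr0.
  exfalso; lia.
rewrite (@sum_trunc _ n.+1 (minn 5 n.+1) G) ?geq_minr //; last by move=> l Hl _; apply: HG.
rewrite -(@sum_trunc _ 5 (minn 5 n.+1) G) ?geq_minl //; last by move=> l Hl _; apply: HG.
rewrite -(big_mkord xpredT G) /G; apply: eq_bigr => l _.
by rewrite intrM mulrA.
Qed.

Fixpoint zsum (N : nat) (T : seq (int * nat)) : int :=
  match T with [::] => 0 | q :: T' => if q.2 == N then q.1 + zsum N T' else zsum N T' end.

Lemma zsumE N T : zsum N T = \sum_(q <- T | q.2 == N) q.1.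
Proof. by elim: T => [|q T IH]; rewrite ?big_nil // big_cons /= IH. Qed.

Lemma zero_check (K : fieldType) (T : seq (int * nat)) :
  all (fun N => zsum N T == 0) (map snd T) ->
  forall n, \sum_(q <- T) (q.1)%:~R * (n == q.2)%:R = 0 :> K.
Proof.
move=> H n.
have -> : \sum_(q <- T) (q.1)%:~R * (n == q.2)%:R = (\sum_(q <- T | q.2 == n) q.1)%:~R :> K.
  rewrite (big_morph (fun z : int => z%:~R : K) (@intrD K) (mulr0z 1)) /= [RHS]big_mkcond /=.
  by apply: eq_bigr => q _; rewrite eq_sym; case: eqP => _; rewrite ?mulr1 ?mulr0.
case: (boolP (n \in map snd T)) => Hn.
  by move/allP: H => /(_ n Hn); rewrite zsumE => /eqP ->.
rewrite big1_seq //= => q /andP [/eqP Eq Hq].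
by exfalso; move: Hn; rewrite -Eq (map_f snd Hq).
Qed.

Lemma ker_f1 (K : fieldType) : kerP (f1 K).
Proof. move=> n; rewrite /f1 rho_poly //; apply: zero_check. by vm_compute. Qed.
Lemma ker_f2 (K : fieldType) : kerP (f2 K).
Proof. move=> n; rewrite /f2 rho_poly //; apply: zero_check. by vm_compute. Qed.
Lemma ker_f3 (K : fieldType) : kerP (f3 K).
Proof. move=> n; rewrite /f3 rho_poly //; apply: zero_check. by vm_compute. Qed.
Lemma ker_f4 (K : fieldType) : kerP (f4 K).
Proof. move=> n; rewrite /f4 rho_poly //; apply: zero_check. by vm_compute. Qed.

Fixpoint zsumm (a : mon) (s : seq (mon * int)) : int :=
  match s with [::] => 0 | p :: s' => if p.1 == a then p.2 + zsumm a s' else zsumm a s' end.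

Lemma poly_ofZ (K : fieldType) s a : poly_of K s a = (zsumm a s)%:~R.
Proof.
rewrite /poly_of; elim: s => [|p s IH]; first by rewrite big_nil.
rewrite big_cons /= IH; case: ifP => _ //; by rewrite intrD.
Qed.

Lemma zsumm_notin a s : a \notin map fst s -> zsumm a s = 0.
Proof.
elim: s => [|p s IH] //=; rewrite inE negb_or => /andP [H1 H2].
by rewrite eq_sym (negbTE H1) IH.
Qed.

Definition ds_gtb (a b : mon) : bool :=
  (mdeg a < mdeg b)%N || ((mdeg a == mdeg b) && ((a.2 < b.2)%N || ((a.2 == b.2) && (a.1.2 < b.1.2)%N)
     || ((a.2 == b.2) && (a.1.2 == b.1.2) && (a.1.1 < b.1.1)%N))).

Lemma ds_gtbP a b : ds_gtb a b -> ds_gt a b.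
Proof.
rewrite /ds_gtb /ds_gt /mdeg => H; lia.
Qed.

Lemma is_LM_poly (K : fieldType) s a : (zsumm a s)%:~R != 0 :> K ->
  all (fun b => (b == a) || ds_gtb a b) (map fst s) -> is_LM (poly_of K s) a.
Proof.
move=> Ha Hall; split; first by rewrite poly_ofZ.
move=> b Hb Hne; apply: ds_gtbP.
have Hin : b \in map fst s.
  apply: contraR Hb => Hn; by rewrite poly_ofZ zsumm_notin.
move/allP: Hall => /(_ b Hin) /orP [/eqP E|] //.
Qed.

Lemma LM_f1 (K : fieldType) : (3%:R : K) != 0 -> is_LM (f1 K) (0,3,0)%N.
Proof. move=> h; apply: is_LM_poly; by vm_compute. Qed.
Lemma LM_f2 (K : fieldType) : (2%:R : K) != 0 -> is_LM (f2 K) (0,2,1)%N.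
Proof. move=> h; apply: is_LM_poly; by vm_compute. Qed.
Lemma LM_f3 (K : fieldType) : is_LM (f3 K) (0,1,2)%N.
Proof. apply: is_LM_poly; [by rewrite oner_eq0 | by vm_compute]. Qed.
Lemma LM_f4 (K : fieldType) : is_LM (f4 K) (0,0,3)%N.
Proof. apply: is_LM_poly; [by rewrite oner_eq0 | by vm_compute]. Qed.

Lemma char_ne0 (K : fieldType) q : prime q -> (q < 5)%N ->
  ([pchar K] =i pred0 \/ exists p : nat, p \in [pchar K] /\ (5 <= p)%N) ->
  (q%:R : K) != 0.
Proof.
move=> Hq Hq5 [Hc|[p [Hp Hp5]]]; apply/negP => H0.
  by have := Hc q; rewrite inE /= Hq H0.
have Hin : q \in [pchar K] by rewrite inE /= Hq H0.
have := pcharf_eq Hp q; rewrite Hin => /esym.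
rewrite inE /= => /eqP E; lia.
Qed.

Lemma psmul_mono (K : fieldType) (e b : mon) (q : ps K) :
  psmul (monomial K e) q b =
  if [&& e.1.1 <= b.1.1, e.1.2 <= b.1.2 & e.2 <= b.2]%N
  then q ((b.1.1 - e.1.1)%N, (b.1.2 - e.1.2)%N, (b.2 - e.2)%N) else 0.
Proof.
case: e => [[a1 a2] a3]; case: b => [[x1 x2] x3] /=; rewrite /psmul /=.
have Hm : forall i j k : nat, monomial K (a1,a2,a3) (i,j,k) =
    (i == a1)%:R * ((j == a2)%:R * (k == a3)%:R).
  by move=> i j k; rewrite /monomial -!natrM !mulnb xpair_eqE -andbA.
case: (leqP a1 x1) => H1; [case: (leqP a2 x2) => H2; [case: (leqP a3 x3) => H3|]|] => /=.
- rewrite (sum_only (H1 : (a1 < x1.+1)%N)); last first.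
    move=> i Hi; rewrite big1 // => j _; rewrite big1 // => k _.
    by rewrite Hm (negbTE Hi) !(mul0r, mulr0).
  rewrite (sum_only (H2 : (a2 < x2.+1)%N)); last first.
    move=> j Hj; rewrite big1 // => k _.
    by rewrite Hm (negbTE Hj) !(mul0r, mulr0).
  rewrite (sum_only (H3 : (a3 < x3.+1)%N)); last first.
    move=> k Hk.
    by rewrite Hm (negbTE Hk) !(mul0r, mulr0).
  by rewrite /= Hm !eqxx !mul1r.
- rewrite big1 // => i _; rewrite big1 // => j _; rewrite big1 // => k _.
  rewrite Hm; case: ((k : nat) =P a3) => [Ek|]; last by rewrite !(mul0r, mulr0).
  have := ltn_ord k; lia.
- rewrite big1 // => i _; rewrite big1 // => j _; rewrite big1 // => k _.
  rewrite Hm; case: ((j : nat) =P a2) => [Ej|]; last by rewrite !(mul0r, mulr0).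
  have := ltn_ord j; lia.
- rewrite big1 // => i _; rewrite big1 // => j _; rewrite big1 // => k _.
  rewrite Hm; case: ((i : nat) =P a1) => [Ei|]; last by rewrite !(mul0r, mulr0).
  have := ltn_ord i; lia.
Qed.

Lemma psmul_monoM (K : fieldType) (g1 g2 g3 e1 e2 e3 : nat) (q : ps K) x :
  psmul (monomial K ((g1+e1)%N, (g2+e2)%N, (g3+e3)%N)) q x =
  psmul (monomial K (g1,g2,g3)) (psmul (monomial K (e1,e2,e3)) q) x.
Proof.
rewrite !psmul_mono; case: x => [[x1 x2] x3] /=.
case: ifP => Ha; case: ifP => Hb; rewrite ?psmul_mono /=; try case: ifP => Hc //.
all: try (by congr q; congr (_,_,_); lia).
all: try (by exfalso; move: Ha Hb Hc; lia).
all: try (by exfalso; move: Ha Hb; lia).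
all: done.
Qed.

Lemma ideal_gen_ext (K : fieldType) (S : ps K -> Prop) (h h' : ps K) :
  (forall a, h a = h' a) -> ideal_gen S h' -> ideal_gen S h.
Proof. by move=> E [s [Hs Hh]]; exists s; split => // a; rewrite E Hh. Qed.

Lemma ideal_gen_sum (K : fieldType) (S : ps K -> Prop) (s : seq (ps K * ps K)) :
  (forall p, List.In p s -> ideal_gen S (psmul p.1 p.2)) ->
  ideal_gen S (fun a => \sum_(p <- s) psmul p.1 p.2 a).
Proof.
elim: s => [|p s IH] H.
  by exists [::]; split => // a; rewrite !big_nil.
have [s1 [Hs1 Hh1]] := H p (or_introl erefl).
have [s2 [Hs2 Hh2]] := IH (fun q Hq => H q (or_intror Hq)).
exists (s1 ++ s2); split.
  by move=> q Hq; case: (List.in_app_or _ _ _ Hq) => Hq'; [apply: Hs1|apply: Hs2].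
by move=> a; rewrite big_cons big_cat /= Hh1 Hh2.
Qed.

Theorem mainTheorem10 (K : fieldType) :
  ([pchar K] =i pred0 \/ exists p : nat, p \in [pchar K] /\ (5 <= p)%N) ->
  standard_basis
    (fun g : ps K => g = f1 K \/ g = f2 K \/ g = f3 K \/ g = f4 K)
    (@kerP K).
Proof.
move=> Hc.
have h2 : (2%:R : K) != 0 by apply: char_ne0.
have h3 : (3%:R : K) != 0 by apply: char_ne0.
have HG : forall g : ps K, (g = f1 K \/ g = f2 K \/ g = f3 K \/ g = f4 K) -> kerP g.
  by move=> g [->|[->|[->|->]]]; [apply: ker_f1|apply: ker_f2|apply: ker_f3|apply: ker_f4].
split => // h; split.
  case=> s [Hs Hh]; exists s; split => // p Hp.
  have [f [a [Gf [Hb [HLM E]]]]] := Hs p Hp.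
  by exists f, a; split => //; apply: HG.
case=> s [Hs Hh]; apply: (ideal_gen_ext (h' := fun a => \sum_(p <- s) psmul p.1 p.2 a) Hh).
apply: ideal_gen_sum => p Hp.
have [f [a [Pf [Hb [HLM E]]]]] := Hs p Hp.
have H3 := LM_in_J h2 h3 Pf HLM.
case: a HLM E H3 => [[a1 a2] a3] HLM E /= H3.
have Hlm : forall g0 : mon, (exists f : ps K, (f = f1 K \/ f = f2 K \/ f = f3 K \/ f = f4 K)
     /\ is_LM f g0) -> LMset (fun g : ps K => g = f1 K \/ g = f2 K \/ g = f3 K \/ g = f4 K)
    (monomial K g0).
  move=> g0 [f0 [Gf0 Hl]]; exists f0, g0; split => //; split => //.
  by exists g0; case: Hl.
have key : forall g1 g2 g3 e1 e2 e3 : nat,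
   (exists f : ps K, (f = f1 K \/ f = f2 K \/ f = f3 K \/ f = f4 K) /\ is_LM f (g1,g2,g3)) ->
   a1 = (g1 + e1)%N -> a2 = (g2 + e2)%N -> a3 = (g3 + e3)%N ->
   ideal_gen (LMset (fun g : ps K => g = f1 K \/ g = f2 K \/ g = f3 K \/ g = f4 K))
     (psmul p.1 p.2).
  move=> g1 g2 g3 e1 e2 e3 Hex E1 E2 E3.
  exists [:: (monomial K (g1,g2,g3), psmul (monomial K (e1,e2,e3)) p.2)]; split.
    by move=> q [<-|[]]; apply: Hlm.
  by move=> x; rewrite big_cons big_nil addr0 E E1 E2 E3 psmul_monoM.
case: (leqP 3 a3) => Ha3.
  apply: (key 0 0 3 a1 a2 (a3 - 3))%N; try lia.
  by exists (f4 K); split; [right; right; right | apply: LM_f4].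
case: (leqP 2 a3) => Ha3'.
  apply: (key 0 1 2 a1 (a2 - 1) (a3 - 2))%N; try lia.
  by exists (f3 K); split; [right; right; left | apply: LM_f3].
case: (leqP 1 a3) => Ha3''.
  apply: (key 0 2 1 a1 (a2 - 2) (a3 - 1))%N; try lia.
  by exists (f2 K); split; [right; left | apply: LM_f2].
apply: (key 0 3 0 a1 (a2 - 3) a3)%N; try lia.
by exists (f1 K); split; [left | apply: LM_f1].
Qed.
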